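(* For every integer $k \ge 4$, $\gamma(k) \ge 5\cdot 2^{k-2} - 1$.
   Context: For words $C,S$, $C$ is an \emph{s-cover} of $S$ if for every position $i$ of $S$ there exist indices $j_0<\dots<j_{|C|-1}$ with $S[j_t]=C[t]$ for all $t$ and $i\in\{j_0,\dots,j_{|C|-1}\}$. An s-cover $C$ of $S$ is \emph{non-trivial} if $|C|<|S|$; a word is \emph{s-primitive} if it has no non-trivial s-cover. $\gamma(k)$ is the maximum length of an s-primitive word over an alphabet of size $k$. *)

(* Defs.v *)
From mathcomp Require Import all_boot.
Set Implicit Arguments. Unset Strict Implicit. Unset Printing Implicit Defensive.

Definition occ_through {T : eqType} (C S : seq T) (i : nat) : Prop :=
  exists j : nat -> nat,
    (forall t, t.+1 < size C -> j t < j t.+1) /\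
    (forall t, t < size C -> j t < size S) /\
    (forall t, t < size C -> forall x0 : T, nth x0 S (j t) = nth x0 C t) /\
    (exists2 t, t < size C & j t = i).

Definition s_cover {T : eqType} (C S : seq T) : Prop :=
  forall i, i < size S -> occ_through C S i.

Definition s_primitive {T : eqType} (S : seq T) : Prop :=
  forall C : seq T, s_cover C S -> ~ (size C < size S).

(* Main.v *)
Require Import Defs.
From mathcomp Require Import all_boot zify.
Set Implicit Arguments. Unset Strict Implicit. Unset Printing Implicit Defensive.

Lemma incr_lt (j : nat -> nat) n :
  (forall t, t.+1 < n -> j t < j t.+1) ->
  forall a b, a < b -> b < n -> j a < j b.
Proof.
move=> H a b ab bn; elim: b ab bn => [//|b IH] ab bn.
rewrite ltnS leq_eqVlt in ab; case/orP: ab => [/eqP->|ab]; first exact: H.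
by apply: ltn_trans (IH ab (ltnW bn)) (H _ bn).
Qed.

Lemma idx_subseq (T : eqType) (x0 : T) (C S : seq T) (j : nat -> nat) :
  (forall t, t.+1 < size C -> j t < j t.+1) ->
  (forall t, t < size C -> j t < size S) ->
  (forall t, t < size C -> nth x0 S (j t) = nth x0 C t) -> subseq C S.
Proof.
elim: C S j => [|c C IH] S j Hinc Hlt Hnth; first by rewrite sub0seq.
have H0 : j 0 < size S by apply: Hlt.
rewrite -(cat_take_drop (j 0) S).
apply: (subseq_trans _ (suffix_subseq _ _)).
rewrite (drop_nth x0 H0) (Hnth 0 erefl) /= eqxx.
apply: (IH _ (fun t => j t.+1 - (j 0).+1)).
- move=> t /= tn.
  have a := Hinc t.+1 tn. have b := incr_lt Hinc (ltn0Sn t) (ltnW tn).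
  lia.
- move=> t /= tn. rewrite size_drop.
  have a := Hlt t.+1 tn. have b := incr_lt Hinc (ltn0Sn t) tn. lia.
- move=> t /= tn. rewrite nth_drop.
  have b := incr_lt Hinc (ltn0Sn t) tn.
  have -> : (j 0).+1 + (j t.+1 - (j 0).+1) = j t.+1 by lia.
  exact: (Hnth t.+1 tn).
Qed.

Section G.
Variable T : eqType.
Variable x0 : T.

Definition occb (C S : seq T) (i : nat) := has (fun t => (nth x0 C t == nth x0 S i) &&
  subseq (take t C) (take i S) && subseq (drop t.+1 C) (drop i.+1 S)) (iota 0 (size C)).

Lemma occ_sound (C S : seq T) i : occ_through C S i -> occb C S i.
Proof.
case=> j [Hinc [Hlt [Hnth [t tC jt]]]].
have iS : i < size S by rewrite -jt; apply: Hlt.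
apply/hasP; exists t; first by rewrite mem_iota.
apply/andP; split; first (apply/andP; split).
- by rewrite -jt Hnth.
- apply: (@idx_subseq _ x0 _ _ j); rewrite ?size_takel; try lia.
  + move=> u ut; apply: Hinc; lia.
  + move=> u ut; rewrite -jt; apply: (incr_lt Hinc) => //.
  + move=> u ut; rewrite nth_take; last by rewrite -jt; apply: (incr_lt Hinc).
    rewrite nth_take //; apply: Hnth; lia.
- apply: (@idx_subseq _ x0 _ _ (fun u => j (t.+1 + u) - i.+1)); rewrite ?size_drop.
  + move=> u ut.
    have a := Hinc (t.+1 + u) ltac:(lia). rewrite -addnS in a.
    have b := incr_lt Hinc (leq_addr u t.+1) ltac:(lia).
    lia.
  + move=> u ut.
    have a := Hlt (t.+1 + u) ltac:(lia).
    have b := incr_lt Hinc (leq_addr u t.+1) ltac:(lia).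
    lia.
  + move=> u ut; rewrite !nth_drop.
    have b := incr_lt Hinc (leq_addr u t.+1) ltac:(lia).
    have -> : i.+1 + (j (t.+1 + u) - i.+1) = j (t.+1 + u) by lia.
    apply: Hnth; lia.
Qed.

Lemma cover_subseq (C S : seq T) : 0 < size S -> s_cover C S -> subseq C S.
Proof.
move=> S0 /(_ 0 S0) [j [Hinc [Hlt [Hnth _]]]].
apply: (@idx_subseq _ x0 _ _ j Hinc Hlt) => t tC; exact: Hnth.
Qed.

End G.

Lemma map_prim (T U : eqType) (f : T -> U) (g : U -> T) (S : seq T) :
  (forall x, x \in S -> g (f x) = x) -> s_primitive S -> s_primitive (map f S).
Proof.
move=> gf HS C HC; rewrite size_map => CS.
apply: (HS (map g C)); last by rewrite size_map.
move=> i iS.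
have [j [Hinc [Hlt [Hnth [t tC jt]]]]] := HC i ltac:(by rewrite size_map).
exists j; rewrite size_map; split=> //; split.
  by move=> u uC; rewrite -(size_map f); apply: Hlt.
split; last by exists t.
move=> u uC x1.
have jS : j u < size S by rewrite -(size_map f); apply: Hlt.
rewrite (nth_map (f x1)) // -(Hnth u uC (f x1)) (nth_map x1) //.
by rewrite gf // mem_nth.
Qed.

Lemma double_prim (T : eqType) (a : T) (S : seq T) :
  a \notin S -> s_primitive S -> s_primitive (S ++ a :: S).
Proof.
move=> aS HS C.
set P := S ++ a :: S.
move=> HC.
have sP : size P = (size S + size S).+1 by rewrite /P size_cat /= addnS.
have Pn : forall x0, nth x0 P (size S) = a by move=> x0; rewrite /P nth_cat ltnn subnn.
have Pa : forall x0 m, m < size P -> nth x0 P m = a -> m = size S.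
  move=> x0 m mP; rewrite /P nth_cat; case: ltnP => mS.
    by move=> E; move: aS; rewrite -E mem_nth.
  case E: (m - size S) => [|m'] /=; first lia.
  move=> E'; have : m' < size S by lia.
  by move=> m'S; move: aS; rewrite -E' mem_nth.
have [j0 [Hinc0 [Hlt0 [Hnth0 [t0 t0C jt0]]]]] := HC (size S) ltac:(lia).
have Ct0 : forall x0, nth x0 C t0 = a by move=> x0; rewrite -Hnth0 // jt0 Pn.
have key : forall j, (forall t, t < size C -> j t < size P) ->
   (forall t, t < size C -> forall x0, nth x0 P (j t) = nth x0 C t) -> j t0 = size S.
  move=> j Hlt Hnth; apply: (Pa a); first exact: Hlt.
  by rewrite Hnth // Ct0.
set X := take t0 C.
set Y := drop t0.+1 C.
have sC : size C = (size X + size Y).+1.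
  rewrite /X /Y size_takel ?size_drop; lia.
have HX : ~ (size X < size S).
  apply: HS => i iS.
  have [j [Hinc [Hlt [Hnth [t tC jt]]]]] := HC i ltac:(lia).
  have k := key j Hlt Hnth.
  have tt0 : t < t0.
    case: (ltngtP t t0) => // h.
    - have := incr_lt Hinc h tC; lia.
    - subst t; lia.
  exists j; rewrite /X size_takel; last lia.
  split; first by move=> u ut; apply: Hinc; lia.
  split.
    move=> u ut; have := incr_lt Hinc ut t0C; lia.
  split; last by exists t.
  move=> u ut x0; rewrite nth_take // -Hnth; last lia.
  have := incr_lt Hinc ut t0C; rewrite k => h.
  by rewrite /P nth_cat h.
have HY : ~ (size Y < size S).
  apply: HS => i iS.
  have [j [Hinc [Hlt [Hnth [t tC jt]]]]] := HC ((size S).+1 + i) ltac:(lia).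
  have k := key j Hlt Hnth.
  have tt0 : t0 < t.
    case: (ltngtP t t0) => // h.
    - have := incr_lt Hinc h t0C; lia.
    - subst t; lia.
  exists (fun u => j (t0.+1 + u) - (size S).+1); rewrite /Y size_drop.
  split.
    move=> u ut.
    have a1 := Hinc (t0.+1 + u) ltac:(lia). rewrite -addnS in a1.
    have b := incr_lt Hinc (leq_addr u t0.+1) ltac:(lia).
    lia.
  split.
    move=> u ut.
    have a1 := Hlt (t0.+1 + u) ltac:(lia).
    have b := incr_lt Hinc (leq_addr u t0.+1) ltac:(lia).
    lia.
  split; last first.
    exists (t - t0.+1); first lia.
    have -> : t0.+1 + (t - t0.+1) = t by lia.
    lia.
  move=> u ut x0; rewrite nth_drop -Hnth; last lia.
  have b := incr_lt Hinc (leq_addr u t0.+1) ltac:(lia).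
  rewrite /P nth_cat.
  have -> : j (t0.+1 + u) < size S = false by lia.
  have -> : j (t0.+1 + u) - size S = (j (t0.+1 + u) - (size S).+1).+1 by lia.
  by [].
lia.
Qed.

Fixpoint allb (n : nat) (P : bitseq -> bool) : bool :=
  match n with
  | 0 => P [::]
  | n'.+1 => if allb n' (fun m => P (true :: m)) then allb n' (fun m => P (false :: m)) else false
  end.

Lemma allbP n P : allb n P -> forall m, size m = n -> P m.
Proof.
elim: n P => [|n IH] P /=; first by move=> H [|].
case E: allb => // H [|b m] //= [sm].
by case: b; [apply: (IH _ E) | apply: (IH _ H)].
Qed.

Fixpoint lhas (p : nat -> bool) (s : seq nat) : bool :=
  match s with [::] => false | x :: s' => if p x then true else lhas p s' end.

Lemma lhasP p s : lhas p s -> has p s.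
Proof. by elim: s => //= x s IH; case: (p x). Qed.

Definition occl (C S : seq nat) (i : nat) :=
  lhas (fun t => if nth 0 C t == nth 0 S i then
          (if subseq (take t C) (take i S) then subseq (drop t.+1 C) (drop i.+1 S) else false)
          else false) (iota 0 (size C)).

Fixpoint lall (p : nat -> bool) (s : seq nat) : bool :=
  match s with [::] => true | x :: s' => if p x then lall p s' else false end.

Lemma lallP p s x : lall p s -> x \in s -> p x.
Proof. elim: s => //= y s IH; case E: (p y) => // H; rewrite inE; case/orP=> [/eqP->|]; auto. Qed.

Definition B := [:: 0;1;0;2;0;3;1;0;1;3;2;0;1;2;1;0;3;0;2].
Definition order := [:: 9;10;8;11;7;12;6;13;5;14;4;15;3;16;2;17;1;18;0].

Definition chk := allb 19 (fun m => if size (mask m B) < 19 then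
   ~~ lall (occl (mask m B) B) order else true).

Lemma chk_ok : chk = true.
Proof. vm_compute. reflexivity. Qed.

Lemma lhas_has (p : nat -> bool) s : lhas p s = has p s.
Proof. by elim: s => //= x s ->; case: (p x). Qed.

Lemma lallI (p : nat -> bool) (s : seq nat) : (forall x, x \in s -> p x) -> lall p s.
Proof.
elim: s => //= y s IH H; rewrite H ?mem_head //; apply: IH => x xs; apply: H.
by rewrite inE xs orbT.
Qed.

Lemma occl_occb C S i : occl C S i = occb 0 C S i.
Proof.
rewrite /occl /occb lhas_has; apply: eq_has => t.
by case: (_ == _); case: subseq.
Qed.

Lemma B_prim : s_primitive B.
Proof.
move=> C HC CB.
have := cover_subseq 0 (isT : 0 < size B) HC.
case/subseqP => m sm EC; subst C.
have := allbP chk_ok sm; rewrite CB.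
move/negP; apply; apply: lallI => x xo.
have xB : x < size B by move: x xo; apply/allP.
rewrite occl_occb; apply: occ_sound; exact: HC.
Qed.

Fixpoint W (n : nat) : seq nat :=
  match n with 0 => B | n'.+1 => W n' ++ (n' + 4) :: W n' end.

Lemma W_lt n x : x \in W n -> x < n + 4.
Proof.
elim: n x => [|n IH] x /=.
  by move: x; apply/allP.
rewrite mem_cat inE; case/or3P => [/IH|/eqP->|/IH]; lia.
Qed.

Lemma W_size n : (size (W n)).+1 = 5 * 2 ^ (n + 2).
Proof.
elim: n => [//|n IH] /=.
rewrite size_cat /= addnS -addSn IH addSn expnS; lia.
Qed.

Lemma W_prim n : s_primitive (W n).
Proof.
elim: n => [|n IH] /=; first exact: B_prim.
apply: double_prim => //.
by apply/negP => /W_lt; lia.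
Qed.

Theorem mainTheorem2 (k : nat) : 4 <= k ->
  exists S : seq 'I_k, s_primitive S /\ 5 * 2 ^ (k - 2) - 1 <= size S.
Proof.
move=> k4.
have k0 : 0 < k by lia.
pose f := fun x : nat => insubd (Ordinal k0) x : 'I_k.
exists (map f (W (k - 4))); split.
  apply: (@map_prim _ _ f val) ; last exact: W_prim.
  move=> x /W_lt xl; rewrite /f val_insubd; case: ltnP => //; lia.
rewrite size_map.
have := W_size (k - 4).
have -> : k - 4 + 2 = k - 2 by lia.
lia.
Qed.
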